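(* Let $R$ be a commutative ring and let $C^i_{jk}\in R$ ($1\le i,j,k\le n$) satisfy $C^i_{jk}=-C^i_{kj}$ and $\sum_\alpha\bigl(C^\alpha_{ij}C^l_{\alpha k}+C^\alpha_{jk}C^l_{\alpha i}+C^\alpha_{ki}C^l_{\alpha j}\bigr)=0$ for all $i,j,k,l$. In the polynomial ring $R[\partial^1,\dots,\partial^n]$ let $\mathbf C^i_j:=\sum_k C^i_{jk}\partial^k$ and let $\delta_\rho$ denote the partial derivative with respect to $\partial^\rho$. Then for every $L\ge0$ and all $1\le\mu,\nu,\gamma\le n$: $$\sum_{\rho,\sigma}\Bigl(\mathbf C^\rho_\nu C^\sigma_{\mu\rho}(\mathbf C^L)^\gamma_\sigma-\mathbf C^\rho_\mu C^\sigma_{\nu\rho}(\mathbf C^L)^\gamma_\sigma\Bigr)=\sum_\sigma C^\sigma_{\mu\nu}(\mathbf C^{L+1})^\gamma_\sigma,$$ $$\sum_\rho\Bigl(C^\gamma_{\mu\rho}(\mathbf C^L)^\rho_\nu+\mathbf C^\rho_\nu\,\delta_\rho\bigl((\mathbf C^L)^\gamma_\mu\bigr)-C^\gamma_{\nu\rho}(\mathbf C^L)^\rho_\mu-\mathbf C^\rho_\mu\,\delta_\rho\bigl((\mathbf C^L)^\gamma_\nu\bigr)\Bigr)=2\sum_\sigma C^\sigma_{\mu\nu}(\mathbf C^L)^\gamma_\sigma.$$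
   Context: $\mathbf C^L$ is the $L$-th matrix power of the matrix $(\mathbf C^i_j)$ with entries in $R[\partial^1,\dots,\partial^n]$, $\mathbf C^0$ the identity matrix. *)

(* Defs.v *)
From HB Require Import structures.
From mathcomp Require Import all_boot all_order all_algebra.
From mathcomp Require Import mpoly.
Set Implicit Arguments. Unset Strict Implicit. Unset Printing Implicit Defensive.
Import GRing.Theory.
Local Open Scope ring_scope.

(* Structure constants C i j k = C^i_{jk}, indices in 'I_n (i.e. 1..n shifted to 0..n-1).
   The variable 'X_k of {mpoly R[n]} plays the role of \partial^k. *)

Definition bCmx (R : comRingType) (n : nat) (C : 'I_n -> 'I_n -> 'I_n -> R)
  : 'M[{mpoly R[n]}]_n :=
  \matrix_(i, j) \sum_(k < n) (C i j k)%:MP * 'X_k.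

Definition mxpow (T : pzRingType) (n : nat) (A : 'M[T]_n) (L : nat) : 'M[T]_n :=
  iter L (fun B => A *m B) 1%:M.

(* Main.v *)
Require Import Defs.
From HB Require Import structures.
From mathcomp Require Import all_boot all_order all_algebra.
From mathcomp Require Import mpoly ring.
Import GRing.Theory.
Local Open Scope ring_scope.
Set Implicit Arguments. Unset Strict Implicit.

Lemma mderivXk (R : comRingType) n (i k : 'I_n) :
  mderiv i ('X_k : {mpoly R[n]}) = (i == k)%:R.
Proof.
rewrite mderivX mnm1E; have [->|ne] := eqVneq k i.
  by have := addmK U_(i) 0%MM; rewrite add0m => ->; rewrite mpolyX0 scale1r.
by rewrite scale0r.
Qed.

Lemma mderivB_entry (R : comRingType) n (C : 'I_n -> 'I_n -> 'I_n -> R) i j r :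
  mderiv r (bCmx C i j) = (C i j r)%:MP.
Proof.
rewrite mxE raddf_sum (bigD1 r) //= big1 ?addr0.
  by rewrite mderiv_mulC mderivXk eqxx mulr1.
by move=> k /negbTE kr; rewrite mderiv_mulC mderivXk eq_sym kr mulr0.
Qed.

Lemma mxpowS (T : pzRingType) n (A : 'M[T]_n) L :
  mxpow A L.+1 = A *m mxpow A L.
Proof. by []. Qed.

Lemma mxpowSr (T : pzRingType) n (A : 'M[T]_n) L :
  mxpow A L.+1 = mxpow A L *m A.
Proof.
elim: L => [|L IH]; first by rewrite /mxpow /= mulmx1 mul1mx.
by rewrite (mxpowS A L.+1) {1}IH mulmxA -mxpowS.
Qed.

Lemma KR (R : comRingType) n (C : 'I_n -> 'I_n -> 'I_n -> R)
  (Hanti : forall i j k, C i j k = - C i k j)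
  (Hjac : forall i j k l,
     \sum_(a < n) (C a i j * C l a k + C a j k * C l a i + C a k i * C l a j) = 0)
  mu x g k :
  \sum_r (C g mu r * C r x k - C r mu k * C g x r) = \sum_r C r mu x * C g r k.
Proof.
apply/eqP; rewrite -subr_eq0 -sumrB.
rewrite (eq_bigr (fun a => -(C a mu x * C g a k + C a x k * C g a mu + C a k mu * C g a x))).
  by rewrite sumrN Hjac oppr0.
move=> r _; rewrite (Hanti g mu r) (Hanti r mu k) (Hanti g x r); ring.
Qed.

Lemma sum_lin (R : comRingType) n (f : 'I_n -> 'I_n -> R) :
  \sum_r \sum_k ((f r k)%:MP * 'X_k : {mpoly R[n]})
  = \sum_k (\sum_r f r k)%:MP * 'X_k.
Proof.
rewrite exchange_big; apply: eq_bigr => k _.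
by rewrite raddf_sum mulr_suml.
Qed.

Lemma KM (R : comRingType) n (C : 'I_n -> 'I_n -> 'I_n -> R)
  (Hanti : forall i j k, C i j k = - C i k j)
  (Hjac : forall i j k l,
     \sum_(a < n) (C a i j * C l a k + C a j k * C l a i + C a k i * C l a j) = 0)
  mu x g :
  \sum_r ((C g mu r)%:MP * bCmx C r x - bCmx C r mu * (C g x r)%:MP)
  = \sum_r bCmx C g r * (C r mu x)%:MP.
Proof.
transitivity (\sum_r \sum_k ((C g mu r * C r x k - C r mu k * C g x r)%:MP
      * ('X_k : {mpoly R[n]}))).
  apply: eq_bigr => r _; rewrite !mxE mulr_sumr mulr_suml -sumrB.
  by apply: eq_bigr => k _; rewrite mpolyCB !mpolyCM; ring.
transitivity (\sum_r \sum_k ((C r mu x * C g r k)%:MP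
      * ('X_k : {mpoly R[n]}))); last first.
  apply: eq_bigr => r _; rewrite !mxE mulr_suml.
  by apply: eq_bigr => k _; rewrite !mpolyCM; ring.
rewrite !sum_lin; apply: eq_bigr => k _.
by rewrite (KR Hanti Hjac).
Qed.

Lemma PS (R : comRingType) n (C : 'I_n -> 'I_n -> 'I_n -> R) L i j :
  mxpow (bCmx C) L.+1 i j = \sum_t bCmx C i t * mxpow (bCmx C) L t j.
Proof. by rewrite mxpowS [LHS]mxE. Qed.

Lemma PSr (R : comRingType) n (C : 'I_n -> 'I_n -> 'I_n -> R) L i j :
  mxpow (bCmx C) L.+1 i j = \sum_t mxpow (bCmx C) L i t * bCmx C t j.
Proof. by rewrite mxpowSr [LHS]mxE. Qed.

Lemma sum_delta (T : pzRingType) n (f : 'I_n -> T) j :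
  \sum_r f r * (1 *+ (r == j)) = f j.
Proof.
rewrite (bigD1 j) //= eqxx mulr1n mulr1 big1 ?addr0 // => r /negbTE ->.
by rewrite mulr0n mulr0.
Qed.

Lemma sum_delta' (T : pzRingType) n (f : 'I_n -> T) j :
  \sum_r f r * (1 *+ (j == r)) = f j.
Proof. by under eq_bigr => r _ do rewrite eq_sym; apply: sum_delta. Qed.

Lemma mderiv_nat (R : comRingType) n (i : 'I_n) k :
  mderiv i (k%:R : {mpoly R[n]}) = 0.
Proof. by rewrite -mpolyC_nat mderivC. Qed.
Section Step.
Variables (R : comRingType) (n : nat) (C : 'I_n -> 'I_n -> 'I_n -> R).
Hypothesis (Hanti : forall i j k, C i j k = - C i k j).
Hypothesis (Hjac : forall i j k l,
     \sum_(a < n) (C a i j * C l a k + C a j k * C l a i + C a k i * C l a j) = 0).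
Variables (L : nat) (mu nu : 'I_n).
Local Notation b := (bCmx C).
Local Notation P := (mxpow (bCmx C) L).
Local Notation c i j k := ((C i j k)%:MP : {mpoly R[n]}).
Local Notation D := mderiv.

Definition LHSf (Q : 'M[{mpoly R[n]}]_n) ga :=
  \sum_(rho < n)
        (c ga mu rho * Q rho nu
         + b rho nu * D rho (Q ga mu)
         - c ga nu rho * Q rho mu
         - b rho mu * D rho (Q ga nu)).
Definition RHSf (Q : 'M[{mpoly R[n]}]_n) ga :=
  2%:R * \sum_(sig < n) c sig mu nu * Q ga sig.

Lemma step (IH : forall ga, LHSf P ga = RHSf P ga) ga :
  LHSf (mxpow b L.+1) ga = RHSf (mxpow b L.+1) ga.
Proof.
pose X t := \sum_r c t mu r * P r nu.
pose Y t := \sum_r c t nu r * P r mu.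
pose Z t := \sum_s c s mu nu * P t s.
pose Ds t := \sum_r (b r nu * D r (P t mu) - b r mu * D r (P t nu)).
have HDs t : Ds t = 2%:R * Z t - X t + Y t.
  rewrite -[_ * Z t](IH t) /LHSf /Ds /X /Y -sumrB -big_split /=.
  by apply: eq_bigr => r _; ring.
have dP r i j : D r (mxpow b L.+1 i j) = \sum_t (c i t r * P t j + b i t * D r (P t j)).
  by rewrite PS raddf_sum; apply: eq_bigr => t _; rewrite /= mderivM mderivB_entry.
have dec : LHSf (mxpow b L.+1) ga =
   \sum_t (\sum_r (c ga mu r * b r t - b r mu * c ga t r)) * P t nu
 - \sum_t (\sum_r (c ga nu r * b r t - b r nu * c ga t r)) * P t mu
 + \sum_t b ga t * Ds t.
  rewrite /LHSf -sumrB -big_split.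
  under [LHS]eq_bigr => r _ do rewrite !dP !PS !mulr_sumr -big_split -!sumrB.
  rewrite exchange_big; apply: eq_bigr => t _.
  rewrite /Ds !mulr_suml mulr_sumr -sumrB -big_split /=.
  by apply: eq_bigr => r _; ring.
have R1 x y : \sum_t (\sum_r b ga r * c r x t) * P t y
            = \sum_t b ga t * \sum_r c t x r * P r y.
  under eq_bigr => t _ do rewrite mulr_suml.
  rewrite exchange_big; apply: eq_bigr => t _; rewrite mulr_sumr.
  by apply: eq_bigr => r _; ring.
have R2 : RHSf (mxpow b L.+1) ga = \sum_t b ga t * (2%:R * Z t).
  rewrite /RHSf /Z; under eq_bigr => s _ do rewrite PS mulr_sumr.
  rewrite exchange_big mulr_sumr; apply: eq_bigr => t _.
  rewrite !mulr_sumr.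
  by apply: eq_bigr => s _; ring.
rewrite dec.
under eq_bigr => t _ do rewrite (KM Hanti Hjac).
under [X in _ - X + _]eq_bigr => t _ do rewrite (KM Hanti Hjac).
rewrite !R1 R2 -sumrB -big_split /=; apply: eq_bigr => t _.
rewrite HDs /X /Y; ring.
Qed.
End Step.
Theorem part1 (R : comRingType) (n : nat) (C : 'I_n -> 'I_n -> 'I_n -> R)
  (Hanti : forall i j k, C i j k = - C i k j)
  (Hjac : forall i j k l,
     \sum_(a < n) (C a i j * C l a k + C a j k * C l a i + C a k i * C l a j) = 0) :
  forall (L : nat) (mu nu ga : 'I_n),
    (\sum_(rho < n) \sum_(sig < n)
        (bCmx C rho nu * (C sig mu rho)%:MP * mxpow (bCmx C) L ga sig
         - bCmx C rho mu * (C sig nu rho)%:MP * mxpow (bCmx C) L ga sig)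
     = \sum_(sig < n) (C sig mu nu)%:MP * mxpow (bCmx C) L.+1 ga sig).
Proof.
move=> L mu nu ga.
transitivity (\sum_s (\sum_r ((C s mu r)%:MP * bCmx C r nu - bCmx C r mu * (C s nu r)%:MP))
   * mxpow (bCmx C) L ga s).
  rewrite exchange_big; apply: eq_bigr => s _; rewrite mulr_suml.
  by apply: eq_bigr => r _; ring.
under eq_bigr => s _ do rewrite (KM Hanti Hjac).
under [RHS]eq_bigr => s _ do rewrite PSr mulr_sumr.
under eq_bigr => s _ do rewrite mulr_suml.
rewrite exchange_big; apply: eq_bigr => s _; apply: eq_bigr => t _; ring.
Qed.

Unset Implicit Arguments. Unset Strict Implicit.

Theorem mainTheorem2 (R : comRingType) (n : nat) (C : 'I_n -> 'I_n -> 'I_n -> R)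
  (Hanti : forall i j k, C i j k = - C i k j)
  (Hjac : forall i j k l,
     \sum_(a < n) (C a i j * C l a k + C a j k * C l a i + C a k i * C l a j) = 0) :
  forall (L : nat) (mu nu ga : 'I_n),
    (\sum_(rho < n) \sum_(sig < n)
        (bCmx C rho nu * (C sig mu rho)%:MP * mxpow (bCmx C) L ga sig
         - bCmx C rho mu * (C sig nu rho)%:MP * mxpow (bCmx C) L ga sig)
     = \sum_(sig < n) (C sig mu nu)%:MP * mxpow (bCmx C) L.+1 ga sig)
    /\
    (\sum_(rho < n)
        ((C ga mu rho)%:MP * mxpow (bCmx C) L rho nu
         + bCmx C rho nu * mderiv rho (mxpow (bCmx C) L ga mu)
         - (C ga nu rho)%:MP * mxpow (bCmx C) L rho mu
         - bCmx C rho mu * mderiv rho (mxpow (bCmx C) L ga nu))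
     = 2%:R * \sum_(sig < n) (C sig mu nu)%:MP * mxpow (bCmx C) L ga sig).
Proof.
move=> L mu nu ga; split; first exact: part1.
elim: L ga => [|L IH] ga.
  rewrite /mxpow /=.
  under eq_bigr => r _ do rewrite !mxE !mderiv_nat !mulr0 !subr0 addr0.
  rewrite [in RHS](eq_bigr (fun s => (C s mu nu)%:MP * (1 *+ (ga == s)))); last by move=> s _; rewrite mxE.
  rewrite sumrB !sum_delta sum_delta' (Hanti ga nu mu) mpolyCN; ring.
exact: (step Hanti Hjac IH).
Qed.
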